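(* Let $m\ge 2$ and let $\mathcal{R}_m^4$ be the rose graph with $N_m=3m+1$ nodes. For the maximal entropy random walk (MERW) on $\mathcal{R}_m^4$, the stationary probability of the hub node, of any internal node, and of any peripheral node are respectively $$\pi_{\mathrm H}^{\mathrm M}=\frac{m}{2m+2}=\frac{N_m-1}{2(N_m-1)+6},\qquad \pi_{\mathrm I}^{\mathrm M}=\frac{1}{4m}=\frac{3}{4(N_m-1)},\qquad \pi_{\mathrm P}^{\mathrm M}=\frac{1}{2m(m+1)}=\frac{9}{2(N_m+2)(N_m-1)}.$$
   Context: The rose graph $\mathcal{R}_m^4$ ($m\ge2$) is obtained by gluing $m$ cycles of length 4 at a single common node, the hub; it has $3m+1$ nodes. In each 4-cycle, the two neighbours of the hub are internal nodes and the node opposite the hub is the peripheral node. For a connected graph with adjacency matrix $\mathbf{A}=(a_{ij})$, let $\lambda_1$ be the largest eigenvalue of $\mathbf{A}$ and $\psi_1=(\psi_{11},\dots,\psi_{1N})$ the corresponding positive unit eigenvector. The MERW is the Markov chain on nodes with transition probabilities $p_{ij}=\frac{a_{ij}}{\lambda_1}\frac{\psi_{1j}}{\psi_{1i}}$; its stationary distribution is the probability vector $\pi$ with $\pi\mathbf{P}=\pi$. *)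

(* Defs.v *)
From HB Require Import structures.
From mathcomp Require Import all_boot all_order all_algebra.
From mathcomp Require Import all_reals.
Set Implicit Arguments. Unset Strict Implicit. Unset Printing Implicit Defensive.
Import Order.TTheory GRing.Theory Num.Theory.
Local Open Scope ring_scope.

(* Node labelling of the rose graph R_m^4 on 'I_(3m+1):
   node 0 is the hub; for k < m, the k-th 4-cycle is
   hub - (3k+1) - (3k+2) - (3k+3) - hub.
   So node i > 0 lies in cycle (i-1) %/ 3 at position (i-1) %% 3 in {0,1,2};
   positions 0 and 2 are the internal nodes (neighbours of the hub) and
   position 1 is the peripheral node. *)
Definition rose_pos (i : nat) : nat := ((i.-1) %% 3)%N.
Definition rose_cyc (i : nat) : nat := ((i.-1) %/ 3)%N.

Definition is_hub (i : nat) : bool := (i == 0)%N.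
Definition is_internal (i : nat) : bool := (0 < i)%N && (rose_pos i != 1)%N.
Definition is_peripheral (i : nat) : bool := (0 < i)%N && (rose_pos i == 1)%N.

Definition rose_edge (i j : nat) : bool :=
  [|| (is_hub i && is_internal j),
      (is_hub j && is_internal i)
    | [&& (0 < i)%N, (0 < j)%N, rose_cyc i == rose_cyc j &
          ((rose_pos i).+1 == rose_pos j) || ((rose_pos j).+1 == rose_pos i)]].

Definition rose_adj (R : realType) (m : nat) : 'M[R]_(3 * m + 1) :=
  \matrix_(i, j) (rose_edge i j)%:R.

Definition merw_P (R : realType) (n : nat) (A : 'M[R]_n) (lam : R)
  (psi : 'cV[R]_n) : 'M[R]_n :=
  \matrix_(i, j) (A i j / lam * (psi j 0 / psi i 0)).

Definition largest_eigenvalue (R : realType) (n : nat) (A : 'M[R]_n) (lam : R) :=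
  eigenvalue A lam /\ forall mu, eigenvalue A mu -> mu <= lam.

Definition pos_unit_eigvec (R : realType) (n : nat) (A : 'M[R]_n) (lam : R)
  (psi : 'cV[R]_n) :=
  A *m psi = lam *: psi /\ (forall i, 0 < psi i 0) /\ \sum_i (psi i 0) ^+ 2 = 1.

Definition stationary_dist (R : realType) (n : nat) (P : 'M[R]_n) (pi : 'rV[R]_n) :=
  (forall i, 0 <= pi 0 i) /\ \sum_i pi 0 i = 1 /\ pi *m P = pi.

(* Main.v *)
Require Import Defs.
From HB Require Import structures.
From mathcomp Require Import all_boot all_order all_algebra.
From mathcomp Require Import all_reals.
From mathcomp Require Import zify ring lra.
Import Order.TTheory GRing.Theory Num.Theory.
Set Implicit Arguments. Unset Strict Implicit. Unset Printing Implicit Defensive.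
Local Open Scope ring_scope.

Lemma edge_sym i j : rose_edge i j = rose_edge j i.
Proof. rewrite /rose_edge /is_hub /is_internal /rose_pos /rose_cyc; apply/idP/idP; lia. Qed.
Lemma edge0 j : rose_edge 0 j = is_internal j.
Proof. rewrite /rose_edge /is_hub /is_internal /rose_pos /rose_cyc; apply/idP/idP; lia. Qed.
Lemma edgeA k j : rose_edge (3*k+1) j = (j == 0)%N || (j == 3*k+2)%N.
Proof. rewrite /rose_edge /is_hub /is_internal /rose_pos /rose_cyc; apply/idP/idP; lia. Qed.
Lemma edgeB k j : rose_edge (3*k+2) j = (j == 3*k+1)%N || (j == 3*k+3)%N.
Proof. rewrite /rose_edge /is_hub /is_internal /rose_pos /rose_cyc; apply/idP/idP; lia. Qed.
Lemma edgeC k j : rose_edge (3*k+3) j = (j == 0)%N || (j == 3*k+2)%N.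
Proof. rewrite /rose_edge /is_hub /is_internal /rose_pos /rose_cyc; apply/idP/idP; lia. Qed.

Ltac sg := repeat (apply/andP; split); try (apply/eqP; lra).
Definition tf (T : Type) (x y z : T) (j : nat) :=
  if is_hub j then x else if is_internal j then y else z.
Lemma tf_map (T S : Type) (f : T -> S) x y z j : f (tf x y z j) = tf (f x) (f y) (f z) j.
Proof. by rewrite /tf; case: (is_hub j); case: (is_internal j). Qed.
Lemma tf0 (T : Type) (x y z : T) : tf x y z 0 = x. Proof. by []. Qed.
Lemma intA k : is_internal (3*k+1). Proof. rewrite /is_internal /rose_pos; lia. Qed.
Lemma intB k : is_internal (3*k+2) = false.
Proof. apply/negbTE/negP; rewrite /is_internal /rose_pos; lia. Qed.
Lemma intC k : is_internal (3*k+3). Proof. rewrite /is_internal /rose_pos; lia. Qed.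
Lemma hubA k : is_hub (3*k+1) = false. Proof. apply/negbTE; rewrite /is_hub; lia. Qed.
Lemma hubB k : is_hub (3*k+2) = false. Proof. apply/negbTE; rewrite /is_hub; lia. Qed.
Lemma hubC k : is_hub (3*k+3) = false. Proof. apply/negbTE; rewrite /is_hub; lia. Qed.
Lemma tfA (T : Type) (x y z : T) k : tf x y z (3*k+1) = y. Proof. by rewrite /tf hubA intA. Qed.
Lemma tfB (T : Type) (x y z : T) k : tf x y z (3*k+2) = z. Proof. by rewrite /tf hubB intB. Qed.
Lemma tfC (T : Type) (x y z : T) k : tf x y z (3*k+3) = y. Proof. by rewrite /tf hubC intC. Qed.

Lemma sum_tf (R : realType) n (x y z : R) :
  \sum_(0 <= j < 3*n+1) tf x y z j = x + (2*n)%:R * y + n%:R * z.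
Proof.
elim: n => [|n IH]; first by rewrite muln0 add0n big_nat1 tf0 !mul0r !addr0.
have -> : (3*n.+1+1 = (3*n+1).+3)%N by lia.
rewrite !big_nat_recr //= IH.
have -> : (3*n+1).+2 = (3*n+3)%N by lia.
have -> : (3*n+1).+1 = (3*n+2)%N by lia.
idtac.
rewrite tfA tfB tfC -[n.+1]addn1 !(natrM, natrD); ring.
Qed.

Lemma decomp m j : (0 < j < 3 * m + 1)%N ->
  exists2 k, (k < m)%N & [\/ j = 3*k+1, j = 3*k+2 | j = 3*k+3]%N.
Proof.
move=> Hj; exists ((j.-1) %/ 3)%N; first lia.
have : ((j.-1) %% 3 = 0 \/ (j.-1) %% 3 = 1 \/ (j.-1) %% 3 = 2)%N by lia.
case=> [H|[H|H]]; [apply: Or31|apply: Or32|apply: Or33]; lia.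
Qed.
Section Main.
Variables (R : realType) (m : nat).
Hypothesis hm : (2 <= m)%N.
Local Notation N := (3 * m + 1)%N.
Local Notation A := (rose_adj R m).

Definition vf (v : 'cV[R]_N) (n : nat) : R :=
  match (insub n : option 'I_N) with Some j => v j 0 | None => 0 end.
Lemma vfE v (j : 'I_N) : vf v j = v j 0.
Proof. by rewrite /vf valK. Qed.
Lemma vf_ord v j (Hj : (j < N)%N) : vf v j = v (Ordinal Hj) 0.
Proof. by rewrite -(vfE v (Ordinal Hj)). Qed.

Lemma sumE (F : 'I_N -> R) G : (forall j : 'I_N, F j = G (val j)) ->
  \sum_j F j = \sum_(0 <= j < N) G j.
Proof. by move=> H; rewrite big_mkord; apply: eq_bigr => j _; exact: H. Qed.

Lemma rowsum v lam i : A *m v = lam *: v -> (i < N)%N ->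
  lam * vf v i = \sum_(0 <= j < N) (rose_edge i j)%:R * vf v j.
Proof.
move=> H Hi; have := congr1 (fun M : 'M[R]_(N,1) => M (Ordinal Hi) 0) H => /=.
rewrite !mxE (vf_ord v Hi) => <-.
by apply: sumE => j; rewrite !mxE vfE.
Qed.

Lemma sum1 (f : nat -> R) a : (a < N)%N -> \sum_(0 <= j < N) (j == a)%:R * f j = f a.
Proof.
move=> Ha; rewrite (bigD1_seq a) ?mem_index_iota ?iota_uniq //= eqxx mul1r big1 ?addr0 //.
by move=> j /negbTE ->; rewrite mul0r.
Qed.

Lemma sum2 (f : nat -> R) a b : (a < N)%N -> (b < N)%N -> a != b ->
  \sum_(0 <= j < N) ((j == a) || (j == b))%:R * f j = f a + f b.
Proof.
move=> Ha Hb Hab; rewrite -(sum1 f Ha) -(sum1 f Hb) -big_split /=.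
apply: eq_bigr => j _; case: (j =P a) => [->|_] /=.
  by rewrite (negbTE Hab) mul1r mul0r addr0.
by rewrite mul0r add0r.
Qed.

Lemma cyc_eqs v lam k : A *m v = lam *: v -> (k < m)%N ->
  [/\ lam * vf v (3*k+1) = vf v 0 + vf v (3*k+2),
      lam * vf v (3*k+2) = vf v (3*k+1) + vf v (3*k+3) &
      lam * vf v (3*k+3) = vf v 0 + vf v (3*k+2)].
Proof.
move=> H Hk; split; rewrite rowsum //; try lia.
- by under eq_bigr => j _ do rewrite edgeA; rewrite sum2 //; lia.
- by under eq_bigr => j _ do rewrite edgeB; rewrite sum2 //; lia.
- by under eq_bigr => j _ do rewrite edgeC; rewrite sum2 //; lia.
Qed.

Lemma hub_eq v lam : A *m v = lam *: v ->
  lam * vf v 0 = \sum_(0 <= j < N) (is_internal j)%:R * vf v j.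
Proof.
move=> H; rewrite rowsum //; last lia.
by under eq_bigr => j _ do rewrite edge0.
Qed.

Lemma cyc_solve v lam k : A *m v = lam *: v -> (k < m)%N -> lam != 0 ->
  vf v (3*k+3) = vf v (3*k+1) /\
  lam * vf v (3*k+2) = 2 * vf v (3*k+1) /\
  (lam ^+ 2 - 2) * vf v (3*k+1) = lam * vf v 0.
Proof.
move=> H Hk l0; have [E1 E2 E3] := cyc_eqs H Hk.
set v0 := vf v 0 in E1 E2 E3 *; set v1 := vf v (3*k+1) in E1 E2 E3 *.
set v2 := vf v (3*k+2) in E1 E2 E3 *; set v3 := vf v (3*k+3) in E1 E2 E3 *.
have h13 : v3 = v1.
  have : lam * (v3 - v1) = 0 by rewrite mulrBr E1 E3 subrr.
  by move/eqP; rewrite mulf_eq0 (negbTE l0) /= subr_eq0 => /eqP.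
split => //; split; first by rewrite E2 h13; ring.
apply/eqP; rewrite -subr_eq0; apply/eqP.
transitivity (lam*(lam*v1 - (v0+v2)) + (lam*v2 - (v1+v3)) + (v3 - v1)); first ring.
by rewrite E1 E2 h13 !subrr mulr0 !addr0.
Qed.

Lemma m_pos : 0 < m%:R :> R.
Proof. rewrite ltr0n; lia. Qed.

Lemma structure v lam : A *m v = lam *: v -> lam != 0 -> lam ^+ 2 = 2 * m%:R + 2 ->
  forall j, (j < N)%N -> vf v j = vf v 0 * tf 1 (lam / (2 * m%:R)) (m%:R^-1) j.
Proof.
move=> H l0 L j Hj.
have mp := m_pos.
case: (posnP j) => [->|j0]; first by rewrite tf0 mulr1.
have [k Hk Hjk] := decomp (m:=m) (j:=j) (ltac:(lia)).
have [h13 [h2 K]] := cyc_solve H Hk l0.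
rewrite L addrK in K.
case: Hjk => ->; rewrite ?tfA ?tfB ?tfC ?h13.
- apply: (mulfI (x := 2 * m%:R)); first by apply/eqP; lra.
  rewrite K; field; sg.
- have : lam * (m%:R * vf v (3*k+2) - vf v 0) = 0.
    transitivity (m%:R * (lam * vf v (3*k+2)) - lam * vf v 0); first ring.
    by rewrite h2 mulrA -K; ring.
  move/eqP; rewrite mulf_eq0 (negbTE l0) /= subr_eq0 => /eqP <-.
  field; sg.
- apply: (mulfI (x := 2 * m%:R)); first by apply/eqP; lra.
  rewrite K; field; sg.
Qed.
Lemma psi_facts psi lam : pos_unit_eigvec A lam psi -> 0 < lam /\ lam ^+ 2 = 2 * m%:R + 2.
Proof.
case=> H [pos _].
have pf : forall j, (j < N)%N -> 0 < vf psi j by move=> j Hj; rewrite (vf_ord psi Hj).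
have m0 : (0 < m)%N by lia.
have [E1 E2 E3] := cyc_eqs H m0.
have p1 := pf (3*0+1)%N ltac:(lia).
have p2 := pf (3*0+2)%N ltac:(lia).
have p3 := pf (3*0+3)%N ltac:(lia).
have lp : 0 < lam by nra.
have l0 : lam != 0 by rewrite gt_eqF.
have mp := m_pos.
have hp : 0 < vf psi 0 := pf 0%N ltac:(lia).
set h := vf psi 0 in hp E1 E2 E3 *.
have Lp : 0 < lam ^+ 2 - 2.
  have [_ [_ K]] := cyc_solve H m0 l0.
  rewrite -/h in K; nra.
set al := lam * h / (lam ^+ 2 - 2).
have Hint : forall j, (0 <= j < N)%N -> (is_internal j)%:R * vf psi j = tf 0 al 0 j.
  move=> j /andP[_ Hj]; case: (posnP j) => [->|j0]; first by rewrite /= mul0r tf0.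
  have [k Hk Hjk] := decomp (m:=m) (j:=j) (ltac:(lia)).
  have [h13 [_ K]] := cyc_solve H Hk l0.
  have ea : vf psi (3*k+1) = al by rewrite /al -K; field; sg.
  by case: Hjk => ->; rewrite ?intA ?intB ?intC ?tfA ?tfB ?tfC ?h13 ?ea ?mul1r ?mul0r.
have hub := hub_eq H.
rewrite (eq_big_nat _ _ Hint) sum_tf mulr0 add0r addr0 -/h in hub.
split => //.
have lh0 : lam * h != 0 by rewrite gt_eqF // mulr_gt0.
have : (lam ^+ 2 - 2) * (lam * h) = (2 * m)%:R * (lam * h).
  by rewrite {1}hub /al; field; sg.
move/(mulIf lh0); rewrite natrM => E; lra.
Qed.

Lemma sumsq c a b : \sum_(i < N) c * (tf 1 a b i) ^+ 2 = c * (1 + (2 * m)%:R * a ^+ 2 + m%:R * b ^+ 2) :> R.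
Proof.
rewrite (@sumE _ (fun j => tf (c * 1 ^+ 2) (c * a ^+ 2) (c * b ^+ 2) j)); first by rewrite sum_tf; ring.
by move=> j; rewrite (tf_map (fun t => c * t ^+ 2)).
Qed.
End Main.

Theorem theorem5 (R : realType) (m : nat) (hm : (2 <= m)%N)
  (lam : R) (psi : 'cV[R]_(3 * m + 1)) (pi : 'rV[R]_(3 * m + 1)) :
  largest_eigenvalue (rose_adj R m) lam ->
  pos_unit_eigvec (rose_adj R m) lam psi ->
  stationary_dist (merw_P (rose_adj R m) lam psi) pi ->
  let N : R := (3 * m + 1)%:R in
  (forall i : 'I_(3 * m + 1), is_hub i ->
     pi 0 i = m%:R / (2 * m%:R + 2) /\ pi 0 i = (N - 1) / (2 * (N - 1) + 6)) /\
  (forall i : 'I_(3 * m + 1), is_internal i ->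
     pi 0 i = 1 / (4 * m%:R) /\ pi 0 i = 3 / (4 * (N - 1))) /\
  (forall i : 'I_(3 * m + 1), is_peripheral i ->
     pi 0 i = 1 / (2 * m%:R * (m%:R + 1)) /\
     pi 0 i = 9 / (2 * (N + 2) * (N - 1))).
Proof.
move=> _ Hpsi Hst N.
have [lp L] := psi_facts hm Hpsi.
case: Hpsi => Hev [pos nrm].
case: Hst => _ [spi Hpi].
have l0 : lam != 0 by rewrite gt_eqF.
have mp := m_pos R hm.
have ps0 : forall i, psi i 0 != 0 by move=> i; rewrite gt_eqF.
set xv : 'cV[R]_(3 * m + 1) := \col_i (pi 0 i / psi i 0).
have Hx : rose_adj R m *m xv = lam *: xv.
  apply/matrixP => i j; rewrite (ord1 j) !mxE.
  have := congr1 (fun M : 'rV[R]_(3 * m + 1) => M 0 i) Hpi; rewrite !mxE => E.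
  have E' : pi 0 i = psi i 0 / lam * \sum_k (rose_adj R m) i k * xv k 0.
    rewrite -{1}E mulr_sumr; apply: eq_bigr => k _; rewrite !mxE edge_sym.
    by field; rewrite ps0 l0.
  by rewrite E'; field; rewrite ps0 l0.
have Sx := structure hm Hx l0 L.
have Sp := structure hm Hev l0 L.
set a := lam / (2 * m%:R) in Sx Sp.
set b := m%:R^-1 in Sx Sp.
set h := vf psi 0 in Sp.
set x0 := vf xv 0 in Sx.
have Hp : forall i : 'I_(3 * m + 1), pi 0 i = x0 * h * (tf 1 a b i) ^+ 2.
  move=> i; have -> : pi 0 i = vf xv i * vf psi i by rewrite !vfE mxE divfK.
  by rewrite Sx // Sp //; ring.
have Hq : forall i : 'I_(3 * m + 1), psi i 0 ^+ 2 = h ^+ 2 * (tf 1 a b i) ^+ 2.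
  by move=> i; rewrite -vfE Sp // exprMn.
have S : 1 + (2 * m)%:R * a ^+ 2 + m%:R * b ^+ 2 = (2 * m%:R + 2) / m%:R.
  rewrite /a /b expr_div_n L natrM; field; sg.
rewrite (eq_bigr _ (fun i _ => Hp i)) sumsq S in spi.
rewrite (eq_bigr _ (fun i _ => Hq i)) sumsq S in nrm.
have h2 : h ^+ 2 = m%:R / (2 * m%:R + 2).
  apply: (mulIf (x := (2 * m%:R + 2) / m%:R)); first by rewrite mulf_neq0 // ?invr_eq0 gt_eqF //; lra.
  rewrite nrm; field; sg.
have xh : x0 * h = h ^+ 2.
  apply: (mulIf (x := (2 * m%:R + 2) / m%:R)); first by rewrite mulf_neq0 // ?invr_eq0 gt_eqF //; lra.
  by rewrite nrm spi.
have Nm : N = 3 * m%:R + 1 by rewrite /N natrD natrM.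
rewrite Nm; split; [|split] => i Hi; rewrite Hp xh h2.
- rewrite /tf Hi expr1n mulr1; split => //; field; sg.
- have Hh : is_hub i = false by move: Hi; rewrite /is_hub /is_internal; lia.
  rewrite /tf Hh Hi /a expr_div_n L; split; field; sg.
- have Hh : is_hub i = false by move: Hi; rewrite /is_hub /is_peripheral; lia.
  have Hn : is_internal i = false by move: Hi; rewrite /is_internal /is_peripheral; lia.
  rewrite /tf Hh Hn /b; split; field; sg.
Qed.
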